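(* Let $\delta>0$, let $X$ be a geodesic $\delta$--hyperbolic space on which a group $G$ acts by isometries, let $U\subset G$ be finite, let $x_0\in X$ satisfy $\frac1{|U|}\sum_{u\in U}|ux_0-x_0|\leqslant E(U)+\delta$, and let $d$ be either $1$ or $\log_2(2|U|)$. Let $y_0\in S(x_0,1000d\delta)$ and let $B(y_0,100d\delta)$ be the closed ball of radius $100d\delta$ about $y_0$. Then $$\left|\bigcup_{y,z\in B(y_0,100d\delta)\cap S(x_0,1000d\delta)}U_{y,z}\right|\leqslant\frac23|U|.$$
   Context: Distance $|x-y|$; Gromov product $(p,q)_x=\frac12(|p-x|+|q-x|-|p-q|)$; $X$ is $\delta$--hyperbolic if $(p,r)_x\geqslant\min\{(p,q)_x,(q,r)_x\}-\delta$ for all $p,q,r,x$. $E(U):=\inf_{x\in X}\frac1{|U|}\sum_{u\in U}|ux-x|$. $S(x_0,R):=\{x\mid|x-x_0|=R\}$. For $y,z\in S(x_0,1000d\delta)$, $U_{y,z}:=\{u\in U\mid |ux_0-x_0|\geqslant4000d\delta,\ (x_0,ux_0)_y\leqslant d\delta,\ (x_0,u^{-1}x_0)_z\leqslant d\delta\}$. *)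

(* Defs.v *)
From Stdlib Require Import Reals List ClassicalDescription.
From Coquelicot Require Import Coquelicot.
Open Scope R_scope.

Section Defs.
Context {X : Type} (dist : X -> X -> R).

Definition is_metric : Prop :=
  (forall x y, 0 <= dist x y) /\
  (forall x y, dist x y = 0 <-> x = y) /\
  (forall x y, dist x y = dist y x) /\
  (forall x y z, dist x z <= dist x y + dist y z).

Definition is_geodesic : Prop :=
  forall x y, exists gam : R -> X,
    gam 0 = x /\ gam (dist x y) = y /\
    forall s t, 0 <= s <= dist x y -> 0 <= t <= dist x y ->
      dist (gam s) (gam t) = Rabs (s - t).

Definition gromov (p q x : X) : R :=
  / 2 * (dist p x + dist q x - dist p q).

Definition hyperbolic (delta : R) : Prop :=
  forall p q r x,
    gromov p r x >= Rmin (gromov p q x) (gromov q r x) - delta.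

Definition sphere (x0 : X) (rad : R) (x : X) : Prop := dist x x0 = rad.
Definition cball (y0 : X) (rad : R) (y : X) : Prop := dist y y0 <= rad.
End Defs.

Definition is_group {G : Type} (mul : G -> G -> G) (inv : G -> G) (e : G) : Prop :=
  (forall a b c, mul a (mul b c) = mul (mul a b) c) /\
  (forall a, mul e a = a) /\ (forall a, mul a e = a) /\
  (forall a, mul (inv a) a = e) /\ (forall a, mul a (inv a) = e).

Definition isometric_action {G X : Type} (dist : X -> X -> R)
  (mul : G -> G -> G) (e : G) (act : G -> X -> X) : Prop :=
  (forall x, act e x = x) /\
  (forall g h x, act (mul g h) x = act g (act h x)) /\
  (forall g x y, dist (act g x) (act g y) = dist x y).

(** finite subset U of G, represented by a duplicate-free list; |U| = length U *)
Definition card_list {G : Type} (U : list G) : R := INR (length U).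

Definition avg_disp {G X : Type} (dist : X -> X -> R) (act : G -> X -> X)
  (U : list G) (x : X) : R :=
  / card_list U * fold_right Rplus 0 (map (fun u => dist (act u x) x) U).

Definition E_U {G X : Type} (dist : X -> X -> R) (act : G -> X -> X)
  (U : list G) : Rbar :=
  Glb_Rbar (fun r => exists x : X, r = avg_disp dist act U x).

Definition count_in {G : Type} (U : list G) (P : G -> Prop) : nat :=
  length (filter (fun u => if excluded_middle_informative (P u) then true else false) U).

Definition in_Uyz {G X : Type} (dist : X -> X -> R) (inv : G -> G)
  (act : G -> X -> X) (U : list G) (x0 : X) (d delta : R) (y z : X) (u : G) : Prop :=
  In u U /\ dist (act u x0) x0 >= 4000 * d * delta /\
  gromov dist x0 (act u x0) y <= d * delta /\
  gromov dist x0 (act (inv u) x0) z <= d * delta.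

(* Main.v *)
Require Import Defs.
From Stdlib Require Import Reals List Lra ClassicalDescription.
From Coquelicot Require Import Coquelicot.
Open Scope R_scope.

Lemma sum_bound {G : Type} (l : list G) (a b : G -> R) (p : G -> bool) (c K : R) :
  (forall u, In u l -> a u <= b u + K - (if p u then c else 0)) ->
  fold_right Rplus 0 (map a l) <=
  fold_right Rplus 0 (map b l) + K * INR (length l) - c * INR (length (filter p l)).
Proof.
  induction l as [|v l IH]; intros H; cbn [map fold_right length filter].
  - simpl; lra.
  - assert (Hv := H v (or_introl eq_refl)).
    assert (IH' := IH (fun u Hu => H u (or_intror Hu))).
    rewrite S_INR. destruct (p v); cbn [length]; try rewrite S_INR; lra.
Qed.

Theorem lemma6p2
  (X : Type) (dist : X -> X -> R) (delta : R)
  (G : Type) (mul : G -> G -> G) (inv : G -> G) (e : G) (act : G -> X -> X)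
  (U : list G) (x0 y0 : X) (d : R) :
  0 < delta ->
  is_metric dist -> is_geodesic dist -> hyperbolic dist delta ->
  is_group mul inv e -> isometric_action dist mul e act ->
  NoDup U ->
  Rbar_le (avg_disp dist act U x0) (Rbar_plus (E_U dist act U) delta) ->
  (d = 1 \/ d = ln (2 * card_list U) / ln 2) ->
  sphere dist x0 (1000 * d * delta) y0 ->
  INR (count_in U (fun u => exists y z : X,
         cball dist y0 (100 * d * delta) y /\ sphere dist x0 (1000 * d * delta) y /\
         cball dist y0 (100 * d * delta) z /\ sphere dist x0 (1000 * d * delta) z /\
         in_Uyz dist inv act U x0 d delta y z u))
  <= 2 / 3 * card_list U.
Proof.
  intros Hdel [Hpos [Hzero [Hsym Htri]]] _ Hhyp [_ [_ [_ [_ Hinvr]]]] [He [Hmul Hiso]]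
    _ Havg Hd Hy0.
  set (P := fun u => exists y z : X,
         cball dist y0 (100 * d * delta) y /\ sphere dist x0 (1000 * d * delta) y /\
         cball dist y0 (100 * d * delta) z /\ sphere dist x0 (1000 * d * delta) z /\
         in_Uyz dist inv act U x0 d delta y z u).
  fold P.
  unfold count_in, card_list.
  set (p := fun u => if excluded_middle_informative (P u) then true else false).
  destruct U as [|u0 U'] eqn:HU.
  { simpl. lra. }
  rewrite <- HU in *.
  assert (Hn : 1 <= INR (length U)).
  { rewrite HU. simpl length. rewrite S_INR. assert (0 <= INR (length U')) by apply pos_INR. lra. }
  assert (Hd1 : 1 <= d).
  { destruct Hd as [-> | ->]; [lra|].
    unfold card_list.
    assert (Hl2 : 0 < ln 2). { rewrite <- ln_1. apply ln_increasing; lra. }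
    assert (ln 2 <= ln (2 * INR (length U))) by (apply ln_le; lra).
    apply (Rmult_le_reg_r (ln 2)); [lra|]. unfold Rdiv. rewrite Rmult_assoc, Rinv_l; lra. }
  set (D := d * delta).
  assert (HD : delta <= D). { unfold D. nra. }
  set (R0 := 1000 * d * delta).
  assert (HR0 : R0 = 1000 * D) by (unfold R0, D; ring).
  assert (Hper : forall u, In u U ->
     dist (act u y0) y0 <= dist (act u x0) x0 + 2 * R0 - (if p u then 3796 * D - 2 * delta else 0)).
  { intros u Hu.
    assert (Hy0' : dist y0 x0 = R0) by exact Hy0.
    unfold p. destruct (excluded_middle_informative (P u)) as [HP|HP].
    - destruct HP as [y [z [Hcy [Hsy [Hcz [Hsz [_ [HL [Hgy Hgz]]]]]]]]].
      unfold cball, sphere in *. fold R0 in Hsy, Hsz. 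
      fold D in Hcy, Hcz, Hgy, Hgz.
      replace (100 * d * delta) with (100 * D) in Hcy, Hcz by (unfold D; ring).
      replace (4000 * d * delta) with (4000 * D) in HL by (unfold D; ring).
      set (L := dist (act u x0) x0) in *.
      assert (Huu : act u (act (inv u) x0) = x0).
      { rewrite <- Hmul, Hinvr, He. reflexivity. }
      unfold gromov in Hgy, Hgz.
      assert (E1 : dist (act (inv u) x0) z = dist x0 (act u z)).
      { rewrite <- (Hiso u), Huu. reflexivity. }
      assert (E2 : dist x0 (act (inv u) x0) = L).
      { unfold L. rewrite <- (Hiso u), Huu. reflexivity. }
      assert (E3 : dist (act u x0) (act u z) = R0).
      { rewrite Hiso, Hsym. exact Hsz. }
      assert (E4 : dist (act u y0) (act u z) = dist z y0).
      { rewrite Hiso. apply Hsym. }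
      rewrite E1, E2 in Hgz.
      assert (Hh := Hhyp y (act u x0) (act u z) x0).
      unfold gromov in Hh. rewrite E3 in Hh.
      assert (T1 := Htri (act u x0) (act u z) x0).
      rewrite E3 in T1.
      assert (S1 : dist x0 y = R0) by (rewrite Hsym; exact Hsy).
      assert (S2 : dist x0 z = R0) by (rewrite Hsym; exact Hsz).
      assert (S3 : dist (act u z) x0 = dist x0 (act u z)) by apply Hsym.
      assert (S4 : dist y (act u x0) = dist (act u x0) y) by apply Hsym.
      assert (S5 : dist x0 (act u x0) = L) by (unfold L; apply Hsym).
      rewrite S1, S5 in Hgy. rewrite S2 in Hgz. rewrite S3 in Hh, T1. rewrite S4 in Hh. unfold L in *.
      assert (Hm : R0 - D <=
        Rmin (/ 2 * (dist y x0 + dist (act u x0) x0 - dist (act u x0) y))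
             (/ 2 * (dist (act u x0) x0 + dist x0 (act u z) - R0))).
      { apply Rmin_glb; lra. }
      assert (Hyz : dist y (act u z) <= L - 2 * R0 + 4 * D + 2 * delta).
      { unfold L; lra. }
      assert (T2 := Htri (act u y0) (act u z) y0).
      assert (T3 := Htri (act u z) y y0).
      assert (S6 : dist (act u z) y = dist y (act u z)) by apply Hsym.
      rewrite E4 in T2. rewrite S6 in T3. lra.
    - assert (T1 := Htri (act u y0) (act u x0) y0).
      assert (T2 := Htri (act u x0) x0 y0).
      rewrite Hiso in T1. assert (Hs := Hsym x0 y0). lra. }
  assert (Hsum := sum_bound U (fun u => dist (act u y0) y0) (fun u => dist (act u x0) x0) p
                   (3796 * D - 2 * delta) (2 * R0) Hper).
  assert (Hglb := proj1 (Glb_Rbar_correct (fun r => exists x : X, r = avg_disp dist act U x))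
                    (avg_disp dist act U y0) (ex_intro _ y0 eq_refl)).
  unfold E_U in Havg.
  destruct (Glb_Rbar (fun r => exists x : X, r = avg_disp dist act U x)) as [g| |];
    simpl in Havg, Hglb; try contradiction.
  unfold avg_disp, card_list in Havg, Hglb.
  set (n := INR (length U)) in *.
  set (k := INR (length (filter p U))) in *.
  set (S0 := fold_right Rplus 0 (map (fun u => dist (act u x0) x0) U)) in *.
  set (S1 := fold_right Rplus 0 (map (fun u => dist (act u y0) y0) U)) in *.
  assert (HS : S0 <= S1 + n * delta).
  { assert (Hc : / n * S0 <= / n * S1 + delta) by lra.
    apply (Rmult_le_compat_l n) in Hc; [|lra].
    rewrite Rmult_plus_distr_l, <- !Rmult_assoc, Rinv_r in Hc; lra. }
  assert (Hk : (3796 * D - 2 * delta) * k <= (2000 * D + delta) * n) by (rewrite HR0 in Hsum; lra).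
  assert (Hk0 : 0 <= k) by apply pos_INR.
  assert (H1 : 0 <= (1592 * D - 7 * delta) * n) by (apply Rmult_le_pos; lra).
  destruct (Rle_dec (3 * k) (2 * n)) as [Hle|Hgt]; [lra|].
  assert (H2 : 0 < (3 * k - 2 * n) * (3796 * D - 2 * delta)) by (apply Rmult_lt_0_compat; lra).
  nra.
Qed.
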